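(* Assume $E\setminus T\ne\emptyset$ and $\epsilon\ge0$. Let $f\in\mathbb{R}^E$ be feasible with $\xi_r(f)\le(1+\epsilon)\xi_r(f^* )$. Let $g_0=f$ and for $j\ge1$ let $g_j=g_{j-1}-\frac{\Delta_{e_j}(g_{j-1})}{R_{e_j}}c_{e_j}$, where $e_1,e_2,\dots$ are drawn independently from $p$; let $w_j$ be the tree induced voltages of $g_j$. Let $K'$ be uniform on $\{0,1,\dots,\lceil\tau\rceil-1\}$, independent of the $e_j$. Then \[ \mathbb{E}\big[\mathrm{gap}(g_{K'},w_{K'})\big]\le\epsilon\,\xi_r(f^* ). \]
   Context: Let $G=(V,E,w)$ be a connected undirected graph with resistances $r_e=1/w_e>0$. Each edge has a fixed orientation $(a,b)$; for $f\in\mathbb{R}^E$ write $f(b,a):=-f(a,b)$. The incidence matrix $B\in\mathbb{R}^{E\times V}$ has $B_{(a,b),c}=1$ if $c=a$, $-1$ if $c=b$, $0$ otherwise; $R=\mathrm{diag}(r_e)_{e\in E}$; $L=B^TR^{-1}B$. The energy of $f$ is $\xi_r(f)=f^TRf$. Fix $\chi\in\mathbb{R}^V$ with $\sum_a\chi(a)=0$; $f$ is feasible if $B^Tf=\chi$; $f^*$ is the unique feasible $f$ minimizing $\xi_r(f)$. The dual energy of $v\in\mathbb{R}^V$ is $\zeta_r(v)=2v^T\chi-v^TLv$ and $\mathrm{gap}(f,v)=\xi_r(f)-\zeta_r(v)$. Let $T\subseteq E$ be a spanning tree. For vertices $a,b$, $\pi_{(a,b)}\in\mathbb{R}^E$ is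 the unit flow from $a$ to $b$ along the unique $a$–$b$ path in $T$. For $e=(a,b)\in E\setminus T$, $c_e=\mathbf{1}_e-\pi_{(a,b)}$, $R_e=c_e^TRc_e$, $\Delta_e(f)=f^TRc_e$. The tree condition number is $\tau=\sum_{e\in E\setminus T}R_e/r_e$ and $p$ is the distribution on $E\setminus T$ with $p_e=\frac{R_e}{r_e\tau}$. Fix a root $s\in V$; the tree induced voltages of $f$ are $v(a)=\sum r_{e'}f(e')$, summing over the edges $e'$ of the tree path from $a$ to $s$, each traversed in the direction of the path (with the antisymmetry convention). *)

(* Defs.v *)
From HB Require Import structures.
From mathcomp Require Import all_boot all_order all_algebra.
Set Implicit Arguments. Unset Strict Implicit. Unset Printing Implicit Defensive.
Import Order.TTheory GRing.Theory Num.Theory.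
Local Open Scope ring_scope.

Section Electrical.
Variables (R : archiRealFieldType) (V E : finType).
(* edge e is oriented (src e, dst e); r e is its resistance *)
Variables (src dst : E -> V) (r : E -> R).

Definition incid (e : E) (c : V) : R :=
  (c == src e)%:R - (c == dst e)%:R.

Definition feasible (chi : V -> R) (f : E -> R) : Prop :=
  forall c, \sum_(e : E) incid e c * f e = chi c.

Definition energy (f : E -> R) : R := \sum_(e : E) r e * f e ^+ 2.

Definition dual_energy (chi : V -> R) (v : V -> R) : R :=
  2%:R * (\sum_(a : V) v a * chi a)
  - \sum_(e : E) (\sum_(c : V) incid e c * v c) ^+ 2 / r e.

Definition gap (chi : V -> R) (f : E -> R) (v : V -> R) : R :=
  energy f - dual_energy chi v.

(* A step of a walk: edge e traversed in its orientation (d = true,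
   from src e to dst e) or against it (d = false). *)
Definition step_from (st : E * bool) : V :=
  if st.2 then src st.1 else dst st.1.
Definition step_to (st : E * bool) : V :=
  if st.2 then dst st.1 else src st.1.

Fixpoint walk_in (T : {set E}) (a : V) (s : seq (E * bool)) (b : V) : bool :=
  match s with
  | [::] => a == b
  | st :: s' => [&& st.1 \in T, step_from st == a & walk_in T (step_to st) s' b]
  end.

Definition tpath (T : {set E}) (a b : V) (s : seq (E * bool)) : bool :=
  walk_in T a s b && uniq (a :: map step_to s).

(* T is a spanning tree and P a b is the unique a--b path in T *)
Definition tree_paths (T : {set E}) (P : V -> V -> seq (E * bool)) : Prop :=
  forall a b, tpath T a b (P a b) /\ (forall s, tpath T a b s -> s = P a b).

(* the flow along a path: value of the unit flow on edge e *)
Definition path_flow (s : seq (E * bool)) (e : E) : R :=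
  \sum_(st <- s | st.1 == e) (if st.2 then 1 else -1).

Variable P : V -> V -> seq (E * bool).

Definition pi_flow (a b : V) : E -> R := path_flow (P a b).

Definition cyc (e : E) : E -> R :=
  fun e' => (e' == e)%:R - pi_flow (src e) (dst e) e'.

Definition Rcyc (e : E) : R := \sum_(e' : E) r e' * cyc e e' ^+ 2.

Definition Delta (e : E) (f : E -> R) : R :=
  \sum_(e' : E) f e' * r e' * cyc e e'.

Definition tau (T : {set E}) : R := \sum_(e in ~: T) Rcyc e / r e.

Definition prob (T : {set E}) (e : E) : R := Rcyc e / (r e * tau T).

Definition cycle_update (g : E -> R) (e : E) : E -> R :=
  fun e' => g e' - Delta e g / Rcyc e * cyc e e'.

Definition iterate (f : E -> R) (s : seq E) : E -> R := foldl cycle_update f s.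

Definition tree_voltages (s0 : V) (f : E -> R) : V -> R :=
  fun a => \sum_(st <- P a s0) r st.1 * (if st.2 then f st.1 else - f st.1).

Definition nceil (x : R) : nat := `|Num.ceil x|%N.

(* E[ gap(g_{K'}, w_{K'}) ], K' uniform on {0,..,N-1}, N = ceil tau,
   e_1, e_2, ... i.i.d. with law p on E \ T, independent of K'. *)
Definition expected_gap (T : {set E}) (chi : V -> R) (s0 : V) (f : E -> R) : R :=
  (nceil (tau T))%:R^-1 *
  \sum_(k < nceil (tau T))
    \sum_(t : k.-tuple E | all (fun e => e \notin T) t)
      (\prod_(e <- t) prob T e) *
      gap chi (iterate f t) (tree_voltages s0 (iterate f t)).

End Electrical.

(* Main.v *)
Require Import Defs.
From HB Require Import structures.
From mathcomp Require Import all_boot all_order all_algebra.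
From mathcomp Require Import ring lra.
Set Implicit Arguments. Unset Strict Implicit. Unset Printing Implicit Defensive.
Import Order.TTheory GRing.Theory Num.Theory.
Local Open Scope ring_scope.

Section Paths.
Variables (R : archiRealFieldType) (V E : finType) (src dst : E -> V) (r : E -> R).
Variables (T : {set E}) (P : V -> V -> seq (E * bool)).
Hypothesis no_loop : forall e, src e != dst e.
Hypothesis hT : tree_paths src dst T P.

Local Notation sto := (step_to src dst).
Local Notation sfrom := (step_from src dst).

Lemma walk_T a s b : walk_in src dst T a s b -> forall st, st \in s -> st.1 \in T.
Proof.
elim: s a => [|st s IH] a //=.
case/and3P=> h1 _ h3 st'; rewrite in_cons => /orP [/eqP -> //|].
exact: IH h3 st'.
Qed.

Lemma tpath_split s a b c : tpath src dst T a b s -> c \in a :: map sto s ->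
  exists s1 s2, [/\ s = s1 ++ s2, tpath src dst T a c s1 & tpath src dst T c b s2].
Proof.
elim: s a => [|st s IH] a.
  rewrite /tpath /= => /andP [/eqP <- _]; rewrite inE => /eqP ->.
  by exists [::], [::]; rewrite /tpath /= eqxx.
rewrite /tpath /= => /andP [/and3P [h1 h2 h3] hu].
rewrite in_cons => /orP [/eqP ->|hc].
  exists [::], (st :: s); split => //; first by rewrite /tpath /= eqxx.
  by rewrite /tpath /= h1 h2 h3.
have hu' : uniq (sto st :: map sto s) by case/andP: hu.
have [s1 [s2 [Hs hp1 hp2]]] := IH (sto st) (introT andP (conj h3 hu')) hc.
exists (st :: s1), s2; rewrite Hs; split => //.
rewrite Hs in hu.
case/andP: hp1 => hw1 _.
rewrite /tpath /= h1 h2 hw1 /=.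
move: hu; rewrite map_cat !in_cons !mem_cat cat_uniq.
rewrite !negb_or.
move=> /and3P [/and3P [-> -> _] /andP [-> _] /and3P [-> _ _]] //.
Qed.

Definition pot (g : E -> R) (s : seq (E * bool)) : R :=
  \sum_(st <- s) r st.1 * (if st.2 then g st.1 else - g st.1).

Lemma P_edge e : e \in T -> P (dst e) (src e) = [:: (e, false)].
Proof.
move=> eT; symmetry; apply: (hT _ _).2.
by rewrite /tpath /= eT eqxx /= /step_to /= eqxx inE eq_sym no_loop.
Qed.

Lemma tree_edge s0 g e : e \in T ->
  tree_voltages r P s0 g (src e) - tree_voltages r P s0 g (dst e) = r e * g e.
Proof.
move=> eT; rewrite /tree_voltages.
have [hin|hnin] := boolP (src e \in dst e :: map sto (P (dst e) s0)).
  have [s1 [s2 [Hs hp1 hp2]]] := tpath_split (hT (dst e) s0).1 hin.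
  have e1 : s1 = [:: (e, false)] by rewrite ((hT _ _).2 _ hp1) P_edge.
  have e2 : s2 = P (src e) s0 by apply: (hT _ _).2.
  rewrite Hs e1 e2 /= big_cons /=. 
  ring.
have hp : tpath src dst T (src e) s0 ((e, true) :: P (dst e) s0).
  case/andP: (hT (dst e) s0).1 => hw hu.
  rewrite /tpath /= eT eqxx hw /= hnin /=; exact: hu.
by rewrite -((hT _ _).2 _ hp) big_cons /= addrK.
Qed.

Lemma path_pot s0 g a b :
  pot g (P a b) = tree_voltages r P s0 g a - tree_voltages r P s0 g b.
Proof.
have [s Hs] : {s | P a b = s} by exists (P a b).
rewrite Hs.
elim: s a Hs => [|st s IH] a Hs.
  have := (hT a b).1; rewrite Hs /tpath /= => /andP [/eqP -> _].
  by rewrite /pot big_nil subrr.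
have := (hT a b).1; rewrite Hs /tpath /= => /andP [/and3P [h1 h2 h3] hu].
have hs : s = P (sto st) b.
  apply: (hT _ _).2; rewrite /tpath h3; by case/andP: hu.
rewrite /pot big_cons -/(pot g s) (IH _ (esym hs)).
rewrite (_ : r st.1 * (if st.2 then g st.1 else - g st.1) =
   tree_voltages r P s0 g a - tree_voltages r P s0 g (sto st)).
  by rewrite addrA subrK.
move/eqP: h2 <-; rewrite /step_from /step_to.
case: st h1 {Hs hu h3 hs} => e [] /= eT; first by rewrite tree_edge.
rewrite -opprB tree_edge //; ring.
Qed.


Hypothesis r_pos : forall e, 0 < r e.
Lemma r_neq0 e : r e != 0. Proof. by rewrite gt_eqF. Qed.

Lemma sum_ind (I : finType) (h : I -> R) x : \sum_i (x == i)%:R * h i = h x.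
Proof.
rewrite (bigD1 x) //= eqxx mul1r big1 ?addr0 // => i hi.
by rewrite eq_sym (negbTE hi) mul0r.
Qed.

Lemma sum_ind' (I : finType) (h : I -> R) x : \sum_i (i == x)%:R * h i = h x.
Proof. by rewrite -(sum_ind h x); apply: eq_bigr => i _; rewrite eq_sym. Qed.

Lemma path_flow_cons (st : E * bool) s (e' : E) : path_flow R (st :: s) e' =
  (st.1 == e')%:R * (if st.2 then 1 else -1) + path_flow R s e'.
Proof. by rewrite /path_flow big_cons; case: (st.1 == e'); rewrite ?mul1r ?mul0r ?add0r. Qed.

Lemma flow_pot g s : \sum_e' r e' * g e' * path_flow R s e' = pot g s.
Proof.
elim: s => [|st s IH].
  by rewrite /pot big_nil big1 // => e' _; rewrite /path_flow big_nil mulr0.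
under eq_bigr do rewrite path_flow_cons mulrDr.
rewrite big_split /= IH /pot big_cons -/(pot g s); congr (_ + _).
under eq_bigr do rewrite mulrCA.
rewrite sum_ind; case: st.2; ring.
Qed.

Lemma flow_incid a s b c : walk_in src dst T a s b ->
  \sum_e' incid R src dst e' c * path_flow R s e' = (c == a)%:R - (c == b)%:R.
Proof.
elim: s a => [|st s IH] a /=.
  move/eqP => ->; rewrite subrr big1 // => e' _; by rewrite /path_flow big_nil mulr0.
case/and3P => _ /eqP h2 h3.
under eq_bigr do rewrite path_flow_cons mulrDr.
rewrite big_split /= (IH _ h3).
under eq_bigr do rewrite mulrCA.
rewrite sum_ind -h2 /step_from /step_to /incid.
case: st.2 => /=; ring.
Qed.

Lemma incid_cyc e c : \sum_e' incid R src dst e' c * cyc R src dst P e e' = 0.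
Proof.
rewrite /cyc; under eq_bigr do rewrite mulrBr.
rewrite sumrB; under eq_bigr do rewrite mulrC.
rewrite sum_ind' /pi_flow (flow_incid _ (andP (hT _ _).1).1).
by rewrite /incid subrr.
Qed.

Lemma feasible_update chi g e : feasible src dst chi g ->
  feasible src dst chi (cycle_update src dst r P g e).
Proof.
move=> hg c; rewrite /cycle_update.
under eq_bigr do rewrite mulrBr mulrCA.
by rewrite sumrB -mulr_sumr incid_cyc mulr0 subr0 hg.
Qed.

Lemma energy_update g e : Rcyc src dst r P e != 0 ->
  energy r (cycle_update src dst r P g e) =
  energy r g - Delta src dst r P e g ^+ 2 / Rcyc src dst r P e.
Proof.
move=> hR; set a := Delta src dst r P e g / Rcyc src dst r P e.
have H : forall e', r e' * (cycle_update src dst r P g e e') ^+ 2 =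
  r e' * g e' ^+ 2 - (2%:R * a) * (g e' * r e' * cyc R src dst P e e')
  + a ^+ 2 * (r e' * cyc R src dst P e e' ^+ 2).
  by move=> e'; rewrite /cycle_update -/a; ring.
rewrite /energy (eq_bigr _ (fun e' _ => H e')) big_split sumrB /= -!mulr_sumr.
rewrite -/(Delta src dst r P e g) -/(Rcyc src dst r P e) /a; field.
exact: hR.
Qed.

Lemma pi_notT e : e \notin T -> pi_flow R P (src e) (dst e) e = 0.
Proof.
move=> eT; rewrite /pi_flow /path_flow big1_seq // => st /andP [/eqP he hin].
have := walk_T (andP (hT _ _).1).1 hin; rewrite he => h.
by rewrite h in eT.
Qed.

Lemma Rcyc_pos e : e \notin T -> 0 < Rcyc src dst r P e.
Proof.
move=> eT; rewrite /Rcyc (bigD1 e) //= /cyc eqxx pi_notT // subr0 expr1n mulr1.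
rewrite ltr_wpDr ?r_pos //; apply: sumr_ge0 => i _.
by rewrite mulr_ge0 ?sqr_ge0 // ltW.
Qed.

Lemma Rcyc_ge0 e : 0 <= Rcyc src dst r P e.
Proof. by apply: sumr_ge0 => i _; rewrite mulr_ge0 ?sqr_ge0 // ltW. Qed.

Lemma Delta_notT s0 g e : e \notin T -> Delta src dst r P e g =
  r e * g e - (tree_voltages r P s0 g (src e) - tree_voltages r P s0 g (dst e)).
Proof.
move=> eT; rewrite /Delta /cyc; under eq_bigr do rewrite mulrBr.
rewrite sumrB; under eq_bigr do rewrite mulrC.
rewrite sum_ind' -path_pot -flow_pot /pi_flow mulrC; congr (_ - _).
by apply: eq_bigr => i _; ring.
Qed.

Lemma gap_eq chi g s0 : feasible src dst chi g ->
  gap src dst r chi g (tree_voltages r P s0 g) =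
  \sum_(e in ~: T) Delta src dst r P e g ^+ 2 / r e.
Proof.
move=> hg; set v := tree_voltages r P s0 g.
have H1 : forall e, \sum_c incid R src dst e c * v c = v (src e) - v (dst e).
  move=> e; rewrite /incid; under eq_bigr do rewrite mulrBl.
  by rewrite sumrB !sum_ind'.
have H2 : \sum_a v a * chi a = \sum_e g e * (v (src e) - v (dst e)).
  under eq_bigr do rewrite -hg mulr_sumr.
  rewrite exchange_big /=; apply: eq_bigr => e _.
  rewrite -H1 mulr_sumr; apply: eq_bigr => c _; ring.
have H3 : forall e, r e * g e ^+ 2 - (2%:R * (g e * (v (src e) - v (dst e)))
   - (v (src e) - v (dst e)) ^+ 2 / r e) =
   (r e * g e - (v (src e) - v (dst e))) ^+ 2 / r e.
  by move=> e; field; apply: r_neq0.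
rewrite /gap /dual_energy H2.
under [X in _ - (_ - X)]eq_bigr do rewrite H1.
rewrite mulr_sumr -sumrB /energy -sumrB.
rewrite (eq_bigr _ (fun e _ => H3 e)) [RHS]big_mkcond /=.
apply: eq_bigr => e _; rewrite in_setC.
have [eT|eT] := boolP (e \in T) => /=.
  by rewrite /v tree_edge // subrr expr0n mul0r.
by rewrite (Delta_notT s0).
Qed.


Lemma sum_tuple_cons n (h : seq E -> R) :
  \sum_(t : n.+1.-tuple E) h t = \sum_(e : E) \sum_(t : n.-tuple E) h (e :: t).
Proof.
rewrite pair_big /=.
rewrite (reindex (fun p : E * n.-tuple E => [tuple of p.1 :: p.2])) //=.
exists (fun t : n.+1.-tuple E => (thead t, [tuple of behead t])).
  move=> [x t] _ /=; rewrite theadE; congr pair; exact: val_inj.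
move=> t _; apply: val_inj => /=; by case: t => [[|x s] hs].
Qed.

Definition Exp k (F : (E -> R) -> R) g :=
  \sum_(t : k.-tuple E | all (fun e => e \notin T) t)
    (\prod_(e <- t) prob src dst r P T e) * F (iterate src dst r P g t).

Lemma Exp0 F g : Exp 0 F g = F g.
Proof.
rewrite /Exp (big_pred1 [tuple]) => [|t]; first by rewrite big_nil mul1r.
by rewrite [t]tuple0; exact: esym (eqxx _).
Qed.

Lemma ExpS k F g : Exp k.+1 F g =
  \sum_(e | e \notin T) prob src dst r P T e * Exp k F (cycle_update src dst r P g e).
Proof.
rewrite /Exp big_mkcond.
rewrite (sum_tuple_cons _ (fun s => if all (fun e => e \notin T) s then
   (\prod_(x <- s) prob src dst r P T x) * F (iterate src dst r P g s) else 0)).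
rewrite (bigID (fun e => e \notin T)) /= [X in _ + X]big1 ?addr0; last first.
  by move=> e /negPn he; rewrite big1 // => t _; rewrite /= he.
apply: eq_bigr => e he /=; rewrite he /=.
rewrite -big_mkcond mulr_sumr; apply: eq_bigr => t _.
by rewrite big_cons mulrA.
Qed.

Hypothesis hnT : exists e, e \notin T.
Local Notation tauT := (tau src dst r P T).

Lemma tau_pos : 0 < tauT.
Proof.
case: hnT => e0 he0; rewrite /tau (bigD1 e0) ?in_setC //=.
rewrite ltr_wpDr ?divr_gt0 ?Rcyc_pos ?r_pos //.
by apply: sumr_ge0 => i _; rewrite divr_ge0 ?Rcyc_ge0 // ltW.
Qed.

Lemma prob_ge0 e : 0 <= prob src dst r P T e.
Proof. by rewrite /prob divr_ge0 ?Rcyc_ge0 // mulr_ge0 // ltW ?r_pos ?tau_pos. Qed.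

Lemma sum_prob : \sum_(e | e \notin T) prob src dst r P T e = 1.
Proof.
have -> : \sum_(e | e \notin T) prob src dst r P T e = tauT / tauT.
  rewrite /tau mulr_suml; apply: eq_big => [e|e _]; first by rewrite in_setC.
  by rewrite /prob invfM mulrA.
by rewrite divff // gt_eqF // tau_pos.
Qed.

Lemma step_identity chi s0 g : feasible src dst chi g ->
  \sum_(e | e \notin T) prob src dst r P T e * energy r (cycle_update src dst r P g e)
  = energy r g - gap src dst r chi g (tree_voltages r P s0 g) / tauT.
Proof.
move=> hg; rewrite (gap_eq s0 hg).
rewrite (eq_bigr (fun e => prob src dst r P T e * energy r g -
   (Delta src dst r P e g ^+ 2 / r e) / tauT)); last first.
  move=> e he; rewrite energy_update ?gt_eqF ?Rcyc_pos // mulrBr /prob.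
  congr (_ - _); field; rewrite ?gt_eqF ?Rcyc_pos ?r_pos ?tau_pos //.
rewrite sumrB -mulr_suml sum_prob mul1r -mulr_suml; congr (_ - (_ / _)).
by apply: eq_bigl => e; rewrite in_setC.
Qed.

Lemma Exp_ge chi k F c g : feasible src dst chi g ->
  (forall h, feasible src dst chi h -> c <= F h) -> c <= Exp k F g.
Proof.
move=> hg hF; elim: k g hg => [|k IH] g hg; first by rewrite Exp0 hF.
rewrite ExpS -[c]mul1r -sum_prob mulr_suml.
apply: ler_sum => e he; rewrite ler_wpM2l ?prob_ge0 //.
by apply: IH; apply: feasible_update.
Qed.

Lemma Exp_gap chi s0 k g : feasible src dst chi g ->
  Exp k (fun h => gap src dst r chi h (tree_voltages r P s0 h)) g =
  tauT * (Exp k (energy r) g - Exp k.+1 (energy r) g).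
Proof.
elim: k g => [|k IH] g hg.
  rewrite Exp0 ExpS Exp0.
  under eq_bigr do rewrite Exp0.
  rewrite (step_identity s0 hg); field.
  by rewrite gt_eqF // tau_pos.
rewrite ExpS (ExpS k (energy r)) (ExpS k.+1 (energy r)).
rewrite (eq_bigr (fun e => prob src dst r P T e * (tauT *
  (Exp k (energy r) (cycle_update src dst r P g e) -
   Exp k.+1 (energy r) (cycle_update src dst r P g e))))); last first.
  by move=> e _; rewrite IH //; apply: feasible_update.
rewrite mulrBr !mulr_sumr -sumrB; apply: eq_bigr => e _; ring.
Qed.

Lemma Exp_tel chi s0 f N : feasible src dst chi f ->
  \sum_(k < N) Exp k (fun h => gap src dst r chi h (tree_voltages r P s0 h)) f =
  tauT * (energy r f - Exp N (energy r) f).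
Proof.
move=> hf; elim: N => [|N IH]; first by rewrite big_ord0 Exp0 subrr mulr0.
rewrite big_ord_recr /= IH (Exp_gap _ _ hf); ring.
Qed.

End Paths.
Theorem lemma7p3 (R : archiRealFieldType) (V E : finType)
    (src dst : E -> V) (r : E -> R)
    (no_loop : forall e, src e != dst e)
    (r_pos : forall e, 0 < r e)
    (T : {set E}) (P : V -> V -> seq (E * bool))
    (hT : tree_paths src dst T P)
    (hnT : exists e, e \notin T)
    (chi : V -> R) (hchi : \sum_(a : V) chi a = 0)
    (fstar : E -> R) (hfstar : feasible src dst chi fstar)
    (fstar_min : forall h, feasible src dst chi h -> energy r fstar <= energy r h)
    (s0 : V) (eps : R) (heps : 0 <= eps)
    (f : E -> R) (hf : feasible src dst chi f)
    (hfe : energy r f <= (1 + eps) * energy r fstar) :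
  expected_gap src dst r P T chi s0 f <= eps * energy r fstar.
Proof.
have Ht := Exp_tel no_loop hT r_pos hnT s0 (nceil (tau src dst r P T)) hf.
have -> : expected_gap src dst r P T chi s0 f =
  (nceil (tau src dst r P T))%:R^-1 * \sum_(k < nceil (tau src dst r P T))
    Exp src dst r T P k (fun h => gap src dst r chi h (tree_voltages r P s0 h)) f
  by [].
rewrite Ht.
have Hlow := Exp_ge hT r_pos hnT (nceil (tau src dst r P T)) hf fstar_min.
have tpos := tau_pos hT r_pos hnT.
set N := nceil _ in Ht Hlow *. set t := tau _ _ _ _ _ in Ht Hlow tpos *.
set X := Exp _ _ _ _ _ _ _ _ in Hlow *.
have en0 : 0 <= energy r fstar.
  by apply: sumr_ge0 => e _; rewrite mulr_ge0 ?sqr_ge0 // ltW.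
have tN : t <= N%:R.
  rewrite /N /nceil natr_absz ger0_norm ?ceil_ge // ceil_ge0.
  exact: lt_trans (ltrN10 R) tpos.
have hD : energy r f - X <= eps * energy r fstar.
  by move: hfe; rewrite mulrDl mul1r => hfe; lra.
have eg0 : 0 <= eps * energy r fstar by rewrite mulr_ge0.
have [N0|Npos] := eqVneq N 0%N.
  by rewrite N0 invr0 mul0r.
have Np : 0 < (N%:R : R) by rewrite ltr0n lt0n.
rewrite ler_pdivrMl //.
apply: le_trans (_ : t * (eps * energy r fstar) <= _).
  by rewrite ler_wpM2l // ltW.
by rewrite ler_wpM2r.
Qed.
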